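(* Let $n_1<n_2<n_3$ be positive integers with $\gcd(n_1,n_2,n_3)=1$ that minimally generate the numerical semigroup $S=\langle n_1,n_2,n_3\rangle$, and assume $S$ is not symmetric. Let $\delta_1=c_1-r_{12}-r_{13}$, $\delta_3=r_{31}+r_{32}-c_3$ and $g=\gcd(\delta_1,\delta_3)$. Then \[ \Delta(S)=\Big\{\, g\,i \;:\; i\in\{1,\ldots,\max\{\delta_1/g,\delta_3/g\}\},\ \text{the }\lambda\text{-B\'ezout couple of } i \text{ or the }\mu\text{-B\'ezout couple of } i \text{ for } (\delta_1/g,\delta_3/g) \text{ is irreducible}\Big\}. \]
   Context: $S=\langle n_1,n_2,n_3\rangle=\{x_1n_1+x_2n_2+x_3n_3 : x_i\in\mathbb N\}$; minimally generated means no $n_i$ lies in the submonoid generated by the other two. With $F=\max(\mathbb Z\setminus S)$, $S$ is symmetric if $x\in\mathbb Z\setminus S$ implies $F-x\in S$. For $\{i,j,k\}=\{1,2,3\}$, $c_i=\min\{c\in\mathbb Z^+ : cn_i\in\langle n_j,n_k\rangle\}$; when $S$ is not symmetric there are unique positive integers $r_{ij},r_{ik}$ with $c_in_i=r_{ij}n_j+r_{ik}n_k$ (and then $\delta_1,\delta_3$ are positive integers). For $s\in S$, the set of lengths is $\mathcal L(s)=\{x_1+x_2+x_3 : (x_1,x_2,x_3)\in\mathbb N^3,\ x_1n_1+x_2n_2+x_3n_3=s\}=\{m_1<\dots<m_k\}$, $\Delta(s)=\{m_t-m_{t-1}:2\le t\le k\}$, and $\Delta(S)=\bigcup_{s\in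 S}\Delta(s)$. B\'ezout couples: for coprime positive integers $p,q$ and $i\in\{1,\ldots,\max\{p,q\}\}$, the $\lambda$-B\'ezout couple of $i$ for $(p,q)$ is the unique $(x,y)\in\mathbb Z^2$ with $xp+yq=i$ and $0<y\le p$; the $\mu$-B\'ezout couple of $i$ for $(p,q)$ is the unique $(x,y)\in\mathbb Z^2$ with $xp+yq=i$ and $0<x\le q$. The $\lambda$-B\'ezout couple $\boldsymbol\lambda_i$ of $i$ is irreducible if there are no $j,k\in\{1,\ldots,\max\{p,q\}\}$ with $\boldsymbol\lambda_i=\boldsymbol\lambda_j+\boldsymbol\lambda_k$ (sum in $\mathbb Z^2$ of the $\lambda$-B\'ezout couples of $j$ and $k$); irreducibility of $\mu$-B\'ezout couples is defined in the same way using $\mu$-B\'ezout couples. *)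

(* Defs.v *)
From mathcomp Require Import all_boot all_order all_algebra.
Set Implicit Arguments. Unset Strict Implicit. Unset Printing Implicit Defensive.
Import Order.TTheory GRing.Theory Num.Theory.
Local Open Scope ring_scope.

Definition inS3 (n1 n2 n3 : nat) (s : int) : Prop :=
  exists x1 x2 x3 : nat, s = ((x1 * n1 + x2 * n2 + x3 * n3)%N)%:Z.

Definition inS2 (nj nk : nat) (s : nat) : Prop :=
  exists xj xk : nat, s = (xj * nj + xk * nk)%N.

Definition min_gen (n1 n2 n3 : nat) : Prop :=
  ~ inS2 n2 n3 n1 /\ ~ inS2 n1 n3 n2 /\ ~ inS2 n1 n2 n3.

Definition is_frobenius (n1 n2 n3 : nat) (F : int) : Prop :=
  ~ inS3 n1 n2 n3 F /\ forall x : int, F < x -> inS3 n1 n2 n3 x.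

Definition symmetric3 (n1 n2 n3 : nat) : Prop :=
  exists F : int, is_frobenius n1 n2 n3 F /\
    forall x : int, ~ inS3 n1 n2 n3 x -> inS3 n1 n2 n3 (F - x).

Definition is_c (ni nj nk c : nat) : Prop :=
  (0 < c)%N /\ inS2 nj nk (c * ni) /\
  forall c' : nat, (0 < c')%N -> (c' < c)%N -> ~ inS2 nj nk (c' * ni).

Definition is_length (n1 n2 n3 s m : nat) : Prop :=
  exists x1 x2 x3 : nat,
    (x1 * n1 + x2 * n2 + x3 * n3)%N = s /\ (x1 + x2 + x3)%N = m.

Definition in_Delta_s (n1 n2 n3 s d : nat) : Prop :=
  exists m m' : nat, is_length n1 n2 n3 s m /\ is_length n1 n2 n3 s m' /\
    (m < m')%N /\ d = (m' - m)%N /\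
    forall t : nat, (m < t)%N -> (t < m')%N -> ~ is_length n1 n2 n3 s t.

Definition in_Delta_S (n1 n2 n3 d : nat) : Prop :=
  exists s : nat, in_Delta_s n1 n2 n3 s d.

Definition lam_couple (p q i x y : int) : Prop :=
  x * p + y * q = i /\ 0 < y /\ y <= p.

Definition mu_couple (p q i x y : int) : Prop :=
  x * p + y * q = i /\ 0 < x /\ x <= q.

Definition in_range (p q i : int) : Prop := 1 <= i /\ i <= Num.max p q.

Definition irreducible_couple (cpl : int -> int -> int -> int -> int -> Prop)
    (p q i : int) : Prop :=
  exists x y : int, cpl p q i x y /\
    ~ (exists (j k xj yj xk yk : int),
         in_range p q j /\ in_range p q k /\
         cpl p q j xj yj /\ cpl p q k xk yk /\
         x = xj + xk /\ y = yj + yk).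

(* Main.v *)
Require Import Defs.
From mathcomp Require Import all_boot all_order all_algebra.
From mathcomp Require Import zify ring.
Import Order.TTheory GRing.Theory Num.Theory.
Local Open Scope ring_scope.
Section Core.
Variables n1 n2 n3 c1 r12 r13 c3 r31 r32 g p q : int.
Hypothesis hn1 : 0 < n1.
Hypothesis hn12 : n1 < n2.
Hypothesis hn23 : n2 < n3.
Hypothesis hc1 : 0 < c1.
Hypothesis hc3 : 0 < c3.
Hypothesis hr12 : 0 < r12.
Hypothesis hr13 : 0 < r13.
Hypothesis hr31 : 0 < r31.
Hypothesis hr32 : 0 < r32.
Hypothesis e1 : c1 * n1 = r12 * n2 + r13 * n3.
Hypothesis e3 : c3 * n3 = r31 * n1 + r32 * n2.
Hypothesis m1 : forall k u v : int, 0 < k -> k < c1 -> 0 <= u -> 0 <= v -> k * n1 <> u * n2 + v * n3.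
Hypothesis m3 : forall k u v : int, 0 < k -> k < c3 -> 0 <= u -> 0 <= v -> k * n3 <> u * n1 + v * n2.

Lemma pos_of_mul {x y : int} : 0 < y -> 0 < x * y -> 0 < x.
Proof. move=> hy h. nia. Qed.
Lemma pos_mul {x y : int} : 0 < x -> 0 < y -> 0 < x * y.
Proof. move=> hx hy. nia. Qed.
Lemma nneg_mul {x y : int} : 0 <= x -> 0 <= y -> 0 <= x * y.
Proof. move=> hx hy. nia. Qed.

Lemma lt_r31 : r31 < c1.
Proof.
rewrite ltNge; apply/negP => h.
have p1 := pos_mul hr12 (lt_trans hn1 hn12).
have p2 := pos_mul hr32 (lt_trans hn1 hn12).
have h1 : 0 <= (r31 - c1) * n1 by apply: nneg_mul; lia.
have [h2|h2] : r13 < c3 \/ c3 <= r13 by lia.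
  by apply: (m3 (c3 - r13) (r31 - c1) (r12 + r32)); lia.
have h3 : 0 <= (r13 - c3) * n3 by apply: nneg_mul; lia.
lia.
Qed.

Lemma lt_r13 : r13 < c3.
Proof.
rewrite ltNge; apply/negP => h.
have p1 := pos_mul hr12 (lt_trans hn1 hn12).
have p2 := pos_mul hr32 (lt_trans hn1 hn12).
have h1 : 0 <= (r13 - c3) * n3 by apply: nneg_mul; lia.
have [h2|h2] : r31 < c1 \/ c1 <= r31 by lia.
  by apply: (m1 (c1 - r31) (r12 + r32) (r13 - c3)); lia.
have h3 : 0 <= (r31 - c1) * n1 by apply: nneg_mul; lia.
lia.
Qed.

Lemma Dlem x1 x3 k : 0 <= x1 -> x1 < c1 -> 0 <= x3 -> x3 < c3 ->
  (x1 < c1 - r31 \/ x3 < c3 - r13) -> 0 < k -> x1*n1 + x3*n3 = k*n2 -> False.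
Proof.
move=> h1 h2 h3 h4 hD hk E.
have r31c := lt_r31; have r13c := lt_r13.
have n2p : 0 < n2 by lia.
have n3p : 0 < n3 by lia.
have [hk1|hk1] : r12 <= k \/ k < r12 by lia.
  have hx3 : c3 - r13 <= x3.
    rewrite leNgt; apply/negP => hh.
    by apply: (m3 (x3 + r13) (c1 - x1) (k - r12)); lia.
  have hx1 : x1 < c1 - r31 by lia.
  have [hk2|hk2] : r12 + r32 <= k \/ k < r12 + r32 by lia.
    have P1 := pos_mul (_ : 0 < c1 - x1 - r31) hn1.
    have P2 := nneg_mul (_ : 0 <= k - r12 - r32) (ltW n2p).
    have Eq : (x3 - c3 + r13) * n3 = (c1 - x1 - r31) * n1 + (k - r12 - r32) * n2 by lia.
    have hpos : 0 < x3 - c3 + r13.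
      apply: (pos_of_mul n3p); rewrite Eq; lia.
    by apply: (m3 (x3 - c3 + r13) (c1 - x1 - r31) (k - r12 - r32)); lia.
  by apply: (m1 (c1 - r31 - x1) (r12 + r32 - k) (x3 - c3 + r13)); lia.
have [hk3|hk3] : r32 <= k \/ k < r32 by lia.
  have hx1 : c1 - r31 <= x1.
    rewrite leNgt; apply/negP => hh.
    by apply: (m1 (x1 + r31) (k - r32) (c3 - x3)); lia.
  have hx3 : x3 < c3 - r13 by lia.
  by apply: (m3 (c3 - r13 - x3) (x1 - c1 + r31) (r12 + r32 - k)); lia.
have hx1 : x1 = 0.
  have [//|hh] : x1 = 0 \/ 0 < x1 by lia.
  by exfalso; apply: (m1 (c1 - x1) (r12 - k) (x3 + r13)); lia.
have hx3 : x3 = 0.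
  have [//|hh] : x3 = 0 \/ 0 < x3 by lia.
  by exfalso; apply: (m3 (c3 - x3) (x1 + r31) (r32 - k)); lia.
have := pos_mul hk n2p. lia.
Qed.

Definition inD x1 x3 := 0 <= x1 /\ x1 < c1 /\ 0 <= x3 /\ x3 < c3 /\ (x1 < c1 - r31 \/ x3 < c3 - r13).

Lemma red3 (N : nat) : forall u1 u3, 0 <= u1 <= N%:Z -> 0 <= u3 < c3 ->
  exists a b, inD (u1 - (a*c1 - b*r31)) (u3 - (b*c3 - a*r13)).
Proof.
have r31c := lt_r31; have r13c := lt_r13.
elim: N => [|N IH] u1 u3 hu1 hu3.
  exists 0, 0; rewrite /inD; lia.
have [hD|hD] : ((u3 < c3 - r13 /\ u1 < c1) \/ (c3 - r13 <= u3 /\ u1 < c1 - r31)) \/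
   ~ ((u3 < c3 - r13 /\ u1 < c1) \/ (c3 - r13 <= u3 /\ u1 < c1 - r31)) by lia.
  exists 0, 0; rewrite /inD; lia.
have [hh|hh] : u3 < c3 - r13 \/ c3 - r13 <= u3 by lia.
  have [a [b hab]] := IH (u1 - c1) (u3 + r13) (ltac:(lia)) (ltac:(lia)).
  exists (a + 1), b; move: hab; rewrite /inD; lia.
have [a [b hab]] := IH (u1 - (c1 - r31)) (u3 - (c3 - r13)) (ltac:(lia)) (ltac:(lia)).
exists (a + 1), (b + 1); move: hab; rewrite /inD; lia.
Qed.

Lemma red3' u1 u3 : 0 <= u1 -> 0 <= u3 < c3 ->
  exists a b, inD (u1 - (a*c1 - b*r31)) (u3 - (b*c3 - a*r13)).
Proof. move=> h1 h3; apply: (red3 (absz u1)) => //; lia. Qed.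

Lemma red2 (N : nat) : forall u1 u3, - (N%:Z) <= u1 -> 0 <= u3 < c3 ->
  exists a b, inD (u1 - (a*c1 - b*r31)) (u3 - (b*c3 - a*r13)).
Proof.
have r31c := lt_r31; have r13c := lt_r13.
elim: N => [|N IH] u1 u3 hu1 hu3.
  by apply: red3'; lia.
have [hD|hD] : 0 <= u1 \/ u1 < 0 by lia.
  by apply: red3'; lia.
have [hh|hh] : r13 <= u3 \/ u3 < r13 by lia.
  have [a [b hab]] := IH (u1 + c1) (u3 - r13) (ltac:(lia)) (ltac:(lia)).
  exists (a - 1), b; move: hab; rewrite /inD; lia.
have [a [b hab]] := IH (u1 + (c1 - r31)) (u3 + (c3 - r13)) (ltac:(lia)) (ltac:(lia)).
exists (a - 1), (b - 1); move: hab; rewrite /inD; lia.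
Qed.

Lemma red1 u1 u3 : exists a b, inD (u1 - (a*c1 - b*r31)) (u3 - (b*c3 - a*r13)).
Proof.
have c3n : c3 != 0 by lia.
have E := divz_eq u3 c3.
have hm1 := modz_ge0 u3 c3n.
have hm2 := ltz_pmod u3 hc3.
set t := (u3 %/ c3)%Z in E *; set m := (u3 %% c3)%Z in E hm1 hm2 *.
have [a [b hab]] := red2 (absz (u1 + t * r31)) (u1 + t*r31) m (ltac:(lia)) (ltac:(lia)).
exists a, (b + t); move: hab; rewrite /inD. lia.
Qed.

Lemma LM w1 w2 w3 : w1*n1 + w2*n2 + w3*n3 = 0 ->
  exists a b, w1 = a*c1 - b*r31 /\ w2 = -(a*r12) - b*r32 /\ w3 = b*c3 - a*r13.
Proof.
move=> hw.
have [a [b [h1 [h2 [h3 [h4 hD]]]]]] := red1 w1 w3.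
set x1 := w1 - (a*c1 - b*r31) in h1 h2 hD.
set x3 := w3 - (b*c3 - a*r13) in h3 h4 hD.
set e := w2 - (-(a*r12) - b*r32).
have ea := congr1 (fun t => a * t) e1.
have eb := congr1 (fun t => b * t) e3.
rewrite /= in ea eb.
have E : x1 * n1 + x3 * n3 = (- e) * n2 by rewrite /x1 /x3 /e; lia.
have n2p : 0 < n2 by lia.
have P1 := nneg_mul h1 (ltW hn1).
have P3 := nneg_mul h3 (ltW (lt_trans hn1 (lt_trans hn12 hn23))).
have [he|he] : 0 < - e \/ - e <= 0 by lia.
  by exfalso; exact: (Dlem _ _ _ h1 h2 h3 h4 hD he E).
have he' : e = 0.
  have [//|he2] : e = 0 \/ 0 < e by lia.
  have := pos_mul he2 n2p; lia.
have hx1 : x1 = 0.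
  have [//|hx] : x1 = 0 \/ 0 < x1 by lia.
  have := pos_mul hx hn1; rewrite he' in E; lia.
have hx3 : x3 = 0.
  have [//|hx] : x3 = 0 \/ 0 < x3 by lia.
  have := pos_mul hx (lt_trans hn1 (lt_trans hn12 hn23)); rewrite he' in E; lia.
exists a, b; rewrite /x1 /x3 /e in hx1 hx3 he'; lia.
Qed.


Hypothesis hg : 0 < g.
Hypothesis hp : 0 < p.
Hypothesis hq : 0 < q.
Hypothesis ed1 : c1 - r12 - r13 = g * p.
Hypothesis ed3 : r31 + r32 - c3 = g * q.

Definition A1 (a b : int) : int := a*c1 - b*r31.
Definition A2 (a b : int) : int := -(a*r12) - b*r32.
Definition A3 (a b : int) : int := b*c3 - a*r13.
Definition phi (a b : int) : int := a* p - b*q.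
Definition beta : int := q*r12 + p*r32.
Definition alpha : int := q*c1 - p*r31.
Definition gamma : int := p*c3 - q*r13.
Definition valid (y1 y2 y3 a b : int) := 0 <= y1 + A1 a b /\ 0 <= y2 + A2 a b /\ 0 <= y3 + A3 a b.

Ltac un := unfold valid, A1, A2, A3, phi, beta, alpha, gamma in *.

Lemma n3p : 0 < n3. Proof. lia. Qed.
Lemma n2p : 0 < n2. Proof. lia. Qed.

Lemma lenF a b : A1 a b + A2 a b + A3 a b = g * phi a b.
Proof.
have ea := congr1 (fun t => a * t) ed1.
have eb := congr1 (fun t => b * t) ed3.
rewrite /= in ea eb. un. lia.
Qed.

Lemma dotF a b : A1 a b * n1 + A2 a b * n2 + A3 a b * n3 = 0.
Proof.
have ea := congr1 (fun t => a * t) e1.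
have eb := congr1 (fun t => b * t) e3.
rewrite /= in ea eb. un. lia.
Qed.

Lemma all_zero {x y z : int} : x*n1 + y*n2 + z*n3 = 0 -> 0 <= x -> 0 <= y -> 0 <= z ->
  x = 0 /\ y = 0 /\ z = 0.
Proof.
move=> E hx hy hz.
have := nneg_mul hx (ltW hn1); have := nneg_mul hy (ltW n2p); have := nneg_mul hz (ltW n3p).
have [hx0|hx'] : x = 0 \/ 0 < x by lia.
  have [hy0|hy'] : y = 0 \/ 0 < y by lia.
    have [hz0|hz'] : z = 0 \/ 0 < z by lia.
      by [].
    have := pos_mul hz' n3p; lia.
  have := pos_mul hy' n2p; lia.
have := pos_mul hx' hn1; lia.
Qed.

Lemma alpha_gamma : 0 < alpha /\ 0 < gamma.
Proof.
have L := lenF q p. have D := dotF q p.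
have ph : phi q p = 0 by rewrite /phi; lia.
rewrite ph mulr0 in L.
have hb : 0 < beta by rewrite /beta; have := pos_mul hq hr12; have := pos_mul hp hr32; lia.
have [hX|hX] : alpha <= 0 \/ 0 < alpha by lia.
  have hZ : 0 < gamma by move: L hb hX; un; lia.
  have := pos_mul hZ (_ : 0 < n3 - n2).
  have := nneg_mul (_ : 0 <= - alpha) (_ : 0 <= n2 - n1).
  move: D L hX hZ; un; lia.
have [hZ|hZ] : gamma <= 0 \/ 0 < gamma by lia.
  have := pos_mul hX (_ : 0 < n2 - n1).
  have := nneg_mul (_ : 0 <= - gamma) (_ : 0 <= n3 - n2).
  move: D L hX hZ; un; lia.
by [].
Qed.

Lemma halpha : 0 < alpha. Proof. by case: alpha_gamma. Qed.
Lemma hgamma : 0 < gamma. Proof. by case: alpha_gamma. Qed.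
Lemma hbeta : 0 < beta.
Proof. rewrite /beta; have := pos_mul hq hr12; have := pos_mul hp hr32; lia. Qed.

Lemma slopeA {a b : int} : 0 <= a -> 0 < b -> a * c1 <= b * r31 -> phi a b < 0.
Proof.
move=> ha hb h.
have h1 := nneg_mul (_ : 0 <= b * r31 - a * c1) (ltW hp).
have h2 := pos_mul hb halpha.
have : c1 * phi a b < 0 by move: h1 h2; un; lia.
have [//|hh] : phi a b < 0 \/ 0 <= phi a b by lia.
have := nneg_mul (ltW hc1) hh; lia.
Qed.

Lemma slopeG {a b : int} : a < 0 -> a * r13 <= b * c3 -> phi a b < 0.
Proof.
move=> ha h.
have h1 := nneg_mul (_ : 0 <= b * c3 - a * r13) (ltW hq).
have h2 := pos_mul (_ : 0 < - a) hgamma.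
have : c3 * phi a b < 0 by move: h1 h2; un; lia.
have [//|hh] : phi a b < 0 \/ 0 <= phi a b by lia.
have := nneg_mul (ltW hc3) hh; lia.
Qed.

Lemma cbound1 {a b : int} : 0 < A1 a b -> A2 a b <= 0 -> A3 a b <= 0 -> c1 <= A1 a b.
Proof.
move=> h1 h2 h3; rewrite leNgt; apply/negP => h.
have D := dotF a b.
by apply: (m1 (A1 a b) (- A2 a b) (- A3 a b)); lia.
Qed.

Lemma cbound3 {a b : int} : A3 a b < 0 -> 0 <= A1 a b -> 0 <= A2 a b -> A3 a b <= - c3.
Proof.
move=> h1 h2 h3; rewrite leNgt; apply/negP => h.
have D := dotF a b.
by apply: (m3 (- A3 a b) (A1 a b) (A2 a b)); lia.
Qed.


Lemma bound y1 y2 y3 a b : 0 <= y1 -> 0 <= y2 -> 0 <= y3 -> valid y1 y2 y3 a b ->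
  p < phi a b -> q < phi a b ->
  exists a' b', valid y1 y2 y3 a' b' /\ 0 < phi a' b' /\ phi a' b' < phi a b.
Proof.
move=> h1 h2 h3 hv hp' hq'.
have [ha|ha] : 1 <= a \/ a <= 0 by lia.
  exists (a - 1), b.
  have hv1 : 0 <= y1 + A1 (a - 1) b.
    rewrite leNgt; apply/negP => hh.
    have hb : 0 < b.
      have [//|hb] : 0 < b \/ b <= 0 by lia.
      have := nneg_mul (_ : 0 <= a - 1) (ltW hc1).
      have := nneg_mul (_ : 0 <= - b) (ltW hr31).
      move: hh; un; lia.
    have := slopeA (_ : 0 <= a - 1) hb (_ : (a - 1) * c1 <= b * r31).
    move: hh hp'; un; lia.
  move: hv hv1 hp'; un; lia.
exists 0, (-1).
have hy3 : c3 <= y3.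
  rewrite leNgt; apply/negP => hh.
  have ha' : a < 0.
    have [//|ha0] : a < 0 \/ a = 0 by lia.
    have hb : 0 <= b.
      have [//|hb] : 0 <= b \/ b + 1 <= 0 by lia.
      have := nneg_mul (_ : 0 <= - (b + 1)) (ltW hc3).
      move: hv hh; un; subst a; lia.
    have := nneg_mul hb (ltW hq).
    move: hq'; un; subst a; lia.
  have := slopeG ha' (_ : a * r13 <= (b + 1) * c3).
  move: hv hh hq'; un; lia.
move: hv hy3 hq'; un; lia.
Qed.

Lemma G1 (N : nat) : forall y1 y2 y3 a b, 0 <= y1 -> 0 <= y2 -> 0 <= y3 ->
  valid y1 y2 y3 a b -> - (N%:Z) <= A2 a b <= N%:Z ->
  exists y1' y2' y3' a' b', 0 <= y1' /\ 0 <= y2' /\ 0 <= y3' /\ valid y1' y2' y3' a' b' /\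
    y1'*n1 + y2'*n2 + y3'*n3 = y1*n1 + y2*n2 + y3*n3 /\
    y1' + y2' + y3' = y1 + y2 + y3 /\ phi a' b' = phi a b /\ - beta < A2 a' b' /\ A2 a' b' < beta.
Proof.
have hb := hbeta; have ha := halpha; have hc := hgamma.
have D := dotF q p; have L := lenF q p.
have ph : phi q p = 0 by rewrite /phi; lia.
rewrite ph mulr0 in L.
have eA1 : A1 q p = alpha by rewrite /A1 /alpha.
have eA2 : A2 q p = - beta by rewrite /A2 /beta; lia.
have eA3 : A3 q p = gamma by rewrite /A3 /gamma; lia.
rewrite eA1 eA2 eA3 in D L.
elim: N => [|N IH] y1 y2 y3 a b h1 h2 h3 hv hN.
  exists y1, y2, y3, a, b; move: hv hN hb; un; lia.
have [hh|hh] : (- beta < A2 a b /\ A2 a b < beta) \/ ~ (- beta < A2 a b /\ A2 a b < beta) by lia.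
  exists y1, y2, y3, a, b; move: hv hh; un; lia.
have [hl|hl] : A2 a b <= - beta \/ beta <= A2 a b by lia.
  have [y1' [y2' [y3' [a' [b' H]]]]] :=
    IH (y1 + alpha) (y2 - beta) (y3 + gamma) (a - q) (b - p) (ltac:(lia)) (ltac:(move: hv hl; un; lia))
      (ltac:(lia)) (ltac:(move: hv; un; lia)) (ltac:(move: hN hl; un; lia)).
  exists y1', y2', y3', a', b'.
  move: H D L; un; lia.
have [y1' [y2' [y3' [a' [b' H]]]]] :=
  IH y1 y2 y3 (a + q) (b + p) h1 h2 h3 (ltac:(move: hv hl; un; lia)) (ltac:(move: hN hl; un; lia)).
exists y1', y2', y3', a', b'.
move: H; un; lia.
Qed.

Lemma Top (y01 y02 y03 : int) (N : nat) : forall a b, valid y01 y02 y03 a b -> y02 + A2 a b <= N%:Z ->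
  exists a' b', valid y01 y02 y03 a' b' /\ phi a' b' = phi a b /\ y02 + A2 a' b' < beta.
Proof.
have hb := hbeta; have ha := halpha; have hc := hgamma.
elim: N => [|N IH] a b hv hN.
  by exists a, b; move: hv hN hb; un; lia.
have [hh|hh] : y02 + A2 a b < beta \/ beta <= y02 + A2 a b by lia.
  by exists a, b; move: hv hh; un; lia.
have [a' [b' H]] := IH (a + q) (b + p) (ltac:(move: hv hh; un; lia)) (ltac:(move: hN hh; un; lia)).
exists a', b'; move: H; un; lia.
Qed.

Lemma classify a b : 1 <= phi a b -> (phi a b <= p \/ phi a b <= q) -> - beta < A2 a b -> A2 a b < beta ->
  (a <= 0 /\ - p <= b /\ b <= -1) \/ (1 <= a /\ a <= q /\ 0 <= b /\ b <= p - 1).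
Proof.
move=> h1 h2 h3 h4.
have [hb|hb] : p <= b \/ b < p by lia.
  have ha : q + 1 <= a.
    rewrite leNgt; apply/negP => hh.
    have := nneg_mul (_ : 0 <= q - a) (ltW hp).
    have := nneg_mul (_ : 0 <= b - p) (ltW hq).
    move: h1; un; lia.
  have := nneg_mul (_ : 0 <= a - q - 1) (ltW hr12).
  have := nneg_mul (_ : 0 <= b - p) (ltW hr32).
  move: h3; un; lia.
have [hb'|hb'] : b <= - p - 1 \/ - p <= b by lia.
  have ha : a <= - q.
    rewrite leNgt; apply/negP => hh.
    have := nneg_mul (_ : 0 <= a - 1 + q) (ltW hp).
    have := nneg_mul (_ : 0 <= - p - 1 - b) (ltW hq).
    move: h1 h2; un; lia.
  have := nneg_mul (_ : 0 <= - q - a) (ltW hr12).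
  have := nneg_mul (_ : 0 <= - p - 1 - b) (ltW hr32).
  move: h4; un; lia.
have [hb2|hb2] : b <= -1 \/ 0 <= b by lia.
  left.
  have ha : a <= 0.
    rewrite leNgt; apply/negP => hh.
    have := nneg_mul (_ : 0 <= a - 1) (ltW hp).
    have := nneg_mul (_ : 0 <= - 1 - b) (ltW hq).
    move: h1 h2; un; lia.
  lia.
right.
have ha : 1 <= a.
  rewrite leNgt; apply/negP => hh.
  have := nneg_mul (_ : 0 <= - a) (ltW hp).
  have := nneg_mul hb2 (ltW hq).
  move: h1; un; lia.
have ha' : a <= q.
  rewrite leNgt; apply/negP => hh.
  have := nneg_mul (_ : 0 <= a - q - 1) (ltW hp).
  have := nneg_mul (_ : 0 <= p - 1 - b) (ltW hq).
  move: h1 h2; un; lia.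
lia.
Qed.

Lemma LBl y1 y2 y3 aj bj ak bk : 0 <= y1 -> 0 <= y2 -> 0 <= y3 ->
  valid y1 y2 y3 (aj + ak) (bj + bk) -> aj <= 0 -> bj <= -1 -> ak <= 0 -> bk <= -1 ->
  0 < phi aj bj -> 0 < phi ak bk -> valid y1 y2 y3 aj bj \/ valid y1 y2 y3 ak bk.
Proof.
move=> h1 h2 h3 hv haj hbj hak hbk hpj hpk.
have A3neg : forall a b, a <= 0 -> b <= -1 -> 0 < phi a b -> A3 a b <= 0.
  move=> a b ha hb hph; rewrite leNgt; apply/negP => hh.
  have ha' : a < 0.
    have [//|ha0] : a < 0 \/ a = 0 by lia.
    have := nneg_mul (_ : 0 <= - 1 - b) (ltW hc3).
    move: hh; un; subst a; lia.
  have := slopeG ha' (_ : a * r13 <= b * c3).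
  move: hh hph; un; lia.
have := A3neg _ _ haj hbj hpj; have := A3neg _ _ hak hbk hpk.
have := nneg_mul (_ : 0 <= - aj) (ltW hr12); have := nneg_mul (_ : 0 <= - ak) (ltW hr12).
have := nneg_mul (_ : 0 <= - bj) (ltW hr32); have := nneg_mul (_ : 0 <= - bk) (ltW hr32).
move: hv; un; lia.
Qed.

Lemma LBm y1 y2 y3 aj bj ak bk : 0 <= y1 -> 0 <= y2 -> 0 <= y3 ->
  valid y1 y2 y3 (aj + ak) (bj + bk) -> 1 <= aj -> 0 <= bj -> 1 <= ak -> 0 <= bk ->
  0 < phi aj bj -> 0 < phi ak bk -> valid y1 y2 y3 aj bj \/ valid y1 y2 y3 ak bk.
Proof.
move=> h1 h2 h3 hv haj hbj hak hbk hpj hpk.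
have A1pos : forall a b, 1 <= a -> 0 <= b -> 0 < phi a b -> 0 <= A1 a b.
  move=> a b ha hb hph; rewrite leNgt; apply/negP => hh.
  have hb' : 0 < b.
    have [//|hb0] : 0 < b \/ b = 0 by lia.
    have := pos_mul (_ : 0 < a) hc1.
    move: hh; un; subst b; lia.
  have := slopeA (_ : 0 <= a) hb' (_ : a * c1 <= b * r31).
  move: hh hph; un; lia.
have := A1pos _ _ haj hbj hpj; have := A1pos _ _ hak hbk hpk.
have := nneg_mul (_ : 0 <= aj) (ltW hr12); have := nneg_mul (_ : 0 <= ak) (ltW hr12).
have := nneg_mul hbj (ltW hr32); have := nneg_mul hbk (ltW hr32).
have := nneg_mul hbj (ltW hc3); have := nneg_mul hbk (ltW hc3).
have := nneg_mul (_ : 0 <= aj) (ltW hr13); have := nneg_mul (_ : 0 <= ak) (ltW hr13).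
move: hv; un; lia.
Qed.


Lemma rngE j : in_range p q j <-> 1 <= j /\ (j <= p \/ j <= q).
Proof.
rewrite /in_range le_max; split.
  by case=> h1 /orP h2.
by case=> h1 h2; split => //; apply/orP.
Qed.

Lemma A1lin a b a' b' : A1 (a + a') (b + b') = A1 a b + A1 a' b'. Proof. rewrite /A1; lia. Qed.

Lemma RealL i x y y01 y02 y03 a' b' :
  1 <= i -> (i <= p \/ i <= q) ->
  x * p + y * q = i -> 0 < y -> y <= p ->
  ~ (exists j k xj yj xk yk, in_range p q j /\ in_range p q k /\
        lam_couple p q j xj yj /\ lam_couple p q k xk yk /\ x = xj + xk /\ y = yj + yk) ->
  0 <= y01 -> 0 <= y01 + A1 x (-y) -> (y01 = 0 \/ y01 + A1 x (-y) = 0) ->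
  0 <= y02 -> 0 <= y02 + A2 x (-y) -> (y02 = 0 \/ y02 + A2 x (-y) = 0) ->
  0 <= y03 -> 0 <= y03 + A3 x (-y) -> (y03 = 0 \/ y03 + A3 x (-y) = 0) ->
  valid y01 y02 y03 a' b' -> 0 < phi a' b' -> phi a' b' < i -> False.
Proof.
move=> hi1 hi2 Ei hy1 hy2 Irr h11 h12 h13 h21 h22 h23 h31 h32 h33 hv hph1 hph2.
have hb := hbeta; have ha := halpha; have hc := hgamma.
have hiq : i <= q.
  rewrite leNgt; apply/negP => hqi.
  have hy : 2 <= y.
    have [//|hy] : 2 <= y \/ y = 1 by lia.
    have hx : 1 <= x.
      rewrite leNgt; apply/negP => hx.
      have := nneg_mul (_ : 0 <= - x) (ltW hp).
      subst y; lia.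
    have := nneg_mul (_ : 0 <= x - 1) (ltW hp).
    subst y; lia.
  apply: Irr; exists q, (i - q), 0, 1, x, (y - 1).
  rewrite !rngE /lam_couple; lia.
have hx : x <= 0.
  rewrite leNgt; apply/negP => hx.
  have := nneg_mul (_ : 0 <= x - 1) (ltW hp).
  have := nneg_mul (_ : 0 <= y - 1) (ltW hq).
  lia.
have hx2 : 1 - q <= x.
  rewrite leNgt; apply/negP => hx2.
  have := nneg_mul (_ : 0 <= - q - x) (ltW hp).
  have := nneg_mul (_ : 0 <= p - y) (ltW hq).
  lia.
have hA2z : 0 < A2 x (-y) /\ A2 x (-y) < beta.
  have := nneg_mul (_ : 0 <= - x) (ltW hr12).
  have := pos_mul hy1 hr32.
  have := nneg_mul (_ : 0 <= x + q - 1) (ltW hr12).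
  have := nneg_mul (_ : 0 <= p - y) (ltW hr32).
  un; lia.
have hy02 : y02 = 0 by lia.
have [aw [bw [hvw [hphw hA2w]]]] := Top y01 y02 y03 (absz (y02 + A2 a' b')) a' b' hv (ltac:(lia)).
have hA2w0 : 0 <= A2 aw bw by move: hvw; rewrite /valid; lia.
have [[haw hbw]|[haw hbw]] := classify aw bw (ltac:(lia)) (ltac:(lia)) (ltac:(lia)) (ltac:(lia)).
  2: by exfalso; have := nneg_mul (_ : 0 <= aw - 1) (ltW hr12);
      have := nneg_mul (_ : 0 <= bw) (ltW hr32); move: hA2w0 hbw; un; lia.
set au := x - aw; set bu := - y - bw.
have Eu : phi au bu = i - phi aw bw by rewrite /au /bu; un; lia.
have EA1 : A1 au bu = A1 x (-y) - A1 aw bw by rewrite /au /bu; un; lia.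
have EA2 : A2 au bu = A2 x (-y) - A2 aw bw by rewrite /au /bu; un; lia.
have EA3 : A3 au bu = A3 x (-y) - A3 aw bw by rewrite /au /bu; un; lia.
have [[hau hbu]|[hau [hau2 [hbu hbu2]]]] := classify au bu (ltac:(lia)) (ltac:(lia)) (ltac:(lia)) (ltac:(lia)).
  apply: Irr; exists (phi aw bw), (phi au bu), aw, (- bw), au, (- bu).
  rewrite !rngE /lam_couple; rewrite /au /bu in Eu *; move: hphw; un; lia.
have [hz1|hz1] : A1 x (-y) < 0 \/ 0 <= A1 x (-y) by lia.
  have hy01 : y01 = - A1 x (-y) by lia.
  have hA1u : A1 au bu <= 0 by move: hvw; rewrite /valid; lia.
  have hbu' : 0 < bu.
    have [//|hb0] : 0 < bu \/ bu = 0 by lia.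
    have := pos_mul (_ : 0 < au) hc1.
    move: hA1u; rewrite hb0 /A1; lia.
  have := slopeA (_ : 0 <= au) hbu' (_ : au * c1 <= bu * r31).
  move: hA1u; rewrite /A1; lia.
have hy01 : y01 = 0 by lia.
have hA1w : 0 <= A1 aw bw by move: hvw; rewrite /valid; lia.
have hz3 : A3 x (-y) < 0.
  rewrite ltNge; apply/negP => hz3.
  have [_ [hz _]] := all_zero (dotF x (-y)) hz1 (ltW (proj1 hA2z)) hz3.
  lia.
have hy03 : y03 = - A3 x (-y) by lia.
have hA3u : A3 au bu <= 0 by move: hvw; rewrite /valid; lia.
have hA2u : A2 au bu < 0.
  have := nneg_mul (_ : 0 <= au - 1) (ltW hr12); have := nneg_mul hbu (ltW hr32); un; lia.
have hA1u : 0 < A1 au bu.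
  rewrite ltNge; apply/negP => hh.
  have D := dotF au bu.
  have [_ [hz _]] := all_zero (x := - A1 au bu) (y := - A2 au bu) (z := - A3 au bu) (ltac:(lia)) (ltac:(lia)) (ltac:(lia)) (ltac:(lia)).
  lia.
have hc1u := cbound1 hA1u (ltW hA2u) hA3u.
have hz1' : c1 <= A1 x (-y) by lia.
have Ei' := congr1 (fun t => r31 * t) Ei; rewrite /= in Ei'.
have := nneg_mul (_ : 0 <= x * c1 + y * r31 - c1) (ltW hq).
have := nneg_mul (_ : 0 <= - x) (ltW ha).
have := pos_mul (_ : 0 < c1 - r31) hq.
have := nneg_mul (_ : 0 <= q - i) (ltW hr31).
move: hz1' (lt_r31); un; lia.
Qed.


Lemma RealM i x y y01 y02 y03 a' b' :
  1 <= i -> (i <= p \/ i <= q) ->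
  x * p + y * q = i -> 0 < x -> x <= q ->
  ~ (exists j k xj yj xk yk, in_range p q j /\ in_range p q k /\
        mu_couple p q j xj yj /\ mu_couple p q k xk yk /\ x = xj + xk /\ y = yj + yk) ->
  0 <= y01 -> 0 <= y01 + A1 x (-y) -> (y01 = 0 \/ y01 + A1 x (-y) = 0) ->
  0 <= y02 -> 0 <= y02 + A2 x (-y) -> (y02 = 0 \/ y02 + A2 x (-y) = 0) ->
  0 <= y03 -> 0 <= y03 + A3 x (-y) -> (y03 = 0 \/ y03 + A3 x (-y) = 0) ->
  valid y01 y02 y03 a' b' -> 0 < phi a' b' -> phi a' b' < i -> False.
Proof.
move=> hi1 hi2 Ei hx1 hx2 Irr h11 h12 h13 h21 h22 h23 h31 h32 h33 hv hph1 hph2.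
have hb := hbeta; have ha := halpha; have hc := hgamma.
have hip : i <= p.
  rewrite leNgt; apply/negP => hpi.
  have hx : 2 <= x.
    have [//|hx] : 2 <= x \/ x = 1 by lia.
    have hy : 1 <= y.
      rewrite leNgt; apply/negP => hy.
      have := nneg_mul (_ : 0 <= - y) (ltW hq).
      subst x; lia.
    have := nneg_mul (_ : 0 <= y - 1) (ltW hq).
    subst x; lia.
  apply: Irr; exists p, (i - p), 1, 0, (x - 1), y.
  rewrite !rngE /mu_couple; lia.
have hy : y <= 0.
  rewrite leNgt; apply/negP => hy.
  have := nneg_mul (_ : 0 <= x - 1) (ltW hp).
  have := nneg_mul (_ : 0 <= y - 1) (ltW hq).
  lia.
have hy2 : 1 - p <= y.
  rewrite leNgt; apply/negP => hy2.
  have := nneg_mul (_ : 0 <= q - x) (ltW hp).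
  have := nneg_mul (_ : 0 <= - p - y) (ltW hq).
  lia.
have hA2z : A2 x (-y) < 0 /\ - beta < A2 x (-y).
  have := nneg_mul (_ : 0 <= x - 1) (ltW hr12).
  have := nneg_mul (_ : 0 <= - y) (ltW hr32).
  have := nneg_mul (_ : 0 <= q - x) (ltW hr12).
  have := nneg_mul (_ : 0 <= y - 1 + p) (ltW hr32).
  un; lia.
have hy02 : y02 = - A2 x (-y) by lia.
have hA1z : 0 <= A1 x (-y).
  rewrite leNgt; apply/negP => hh.
  have hb' : 0 < - y.
    have [//|hb0] : 0 < - y \/ y = 0 by lia.
    have := pos_mul hx1 hc1.
    move: hh; rewrite hb0 /A1; lia.
  have := slopeA (_ : 0 <= x) hb' (_ : x * c1 <= (- y) * r31).
  move: hh; un; lia.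
have hy01 : y01 = 0 by lia.
have [aw [bw [hvw [hphw hA2w]]]] := Top y01 y02 y03 (absz (y02 + A2 a' b')) a' b' hv (ltac:(lia)).
have hA2w0 : A2 x (-y) <= A2 aw bw by move: hvw; rewrite /valid; lia.
set au := x - aw; set bu := - y - bw.
have Eu : phi au bu = i - phi aw bw by rewrite /au /bu; un; lia.
have EA1 : A1 au bu = A1 x (-y) - A1 aw bw by rewrite /au /bu; un; lia.
have EA2 : A2 au bu = A2 x (-y) - A2 aw bw by rewrite /au /bu; un; lia.
have EA3 : A3 au bu = A3 x (-y) - A3 aw bw by rewrite /au /bu; un; lia.
have [[hau hbu]|[hau [hau2 [hbu hbu2]]]] := classify au bu (ltac:(lia)) (ltac:(lia)) (ltac:(lia)) (ltac:(lia)).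
  by exfalso; have := nneg_mul (_ : 0 <= - au) (ltW hr12);
      have := nneg_mul (_ : 0 <= - bu - 1) (ltW hr32); move: hA2w0 EA2; un; lia.
have [[haw hbw]|[haw [haw2 [hbw hbw2]]]] := classify aw bw (ltac:(lia)) (ltac:(lia)) (ltac:(lia)) (ltac:(lia)).
  2: by apply: Irr; exists (phi aw bw), (phi au bu), aw, (- bw), au, (- bu);
      rewrite !rngE /mu_couple; rewrite /au /bu in Eu *; move: hphw; un; lia.
have [hz3|hz3] : 0 <= A3 x (-y) \/ A3 x (-y) < 0 by lia.
  have hy03 : y03 = 0 by lia.
  have hA3w : 0 <= A3 aw bw by move: hvw; rewrite /valid; lia.
  have haw' : aw < 0.
    have [//|ha0] : aw < 0 \/ aw = 0 by lia.
    have := nneg_mul (_ : 0 <= - 1 - bw) (ltW hc3).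
    move: hA3w; rewrite /A3 ha0; lia.
  have := slopeG haw' (_ : aw * r13 <= bw * c3).
  move: hA3w; un; lia.
have hy03 : y03 = - A3 x (-y) by lia.
have hA3w : A3 x (-y) <= A3 aw bw by move: hvw; rewrite /valid; lia.
have hA1w : 0 <= A1 aw bw by move: hvw; rewrite /valid; lia.
have hA2w' : 0 < A2 aw bw.
  have := nneg_mul (_ : 0 <= - aw) (ltW hr12); have := nneg_mul (_ : 0 <= - bw - 1) (ltW hr32).
  un; lia.
have hA3w' : A3 aw bw < 0.
  rewrite ltNge; apply/negP => hh.
  have [_ [hz _]] := all_zero (dotF aw bw) hA1w (ltW hA2w') hh.
  lia.
have hc3w := cbound3 hA3w' hA1w (ltW hA2w').
have hz3' : A3 x (-y) <= - c3 by lia.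
have Ei' := congr1 (fun t => c3 * t) Ei; rewrite /= in Ei'.
have := nneg_mul (_ : 0 <= x * r13 - c3 + c3 * y) (ltW hq).
have := nneg_mul (_ : 0 <= x - 1) (ltW hc).
have := pos_mul (_ : 0 < c3 - r13) hq.
have := nneg_mul (_ : 0 <= p - i) (ltW hc3).
move: hz3' (lt_r13); un; lia.
Qed.


Lemma dotA y1 y2 y3 a b :
  (y1 + A1 a b) * n1 + (y2 + A2 a b) * n2 + (y3 + A3 a b) * n3 = y1 * n1 + y2 * n2 + y3 * n3.
Proof. have := dotF a b; lia. Qed.

Lemma sumA y1 y2 y3 a b :
  (y1 + A1 a b) + (y2 + A2 a b) + (y3 + A3 a b) = y1 + y2 + y3 + g * phi a b.
Proof. have := lenF a b; lia. Qed.

Lemma SubCore y1 y2 y3 a b :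
  0 <= y1 -> 0 <= y2 -> 0 <= y3 -> valid y1 y2 y3 a b -> 0 < phi a b ->
  (forall z1 z2 z3, 0 <= z1 -> 0 <= z2 -> 0 <= z3 ->
     z1 * n1 + z2 * n2 + z3 * n3 = y1 * n1 + y2 * n2 + y3 * n3 ->
     y1 + y2 + y3 < z1 + z2 + z3 -> z1 + z2 + z3 < y1 + y2 + y3 + g * phi a b -> False) ->
  in_range p q (phi a b) /\
  (irreducible_couple lam_couple p q (phi a b) \/ irreducible_couple mu_couple p q (phi a b)).
Proof.
move=> h1 h2 h3 hv hph H.
set i := phi a b in hph H *.
have help : forall u1 u2 u3 a' b', 0 <= u1 -> 0 <= u2 -> 0 <= u3 ->
    u1 * n1 + u2 * n2 + u3 * n3 = y1 * n1 + y2 * n2 + y3 * n3 -> u1 + u2 + u3 = y1 + y2 + y3 ->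
    valid u1 u2 u3 a' b' -> 0 < phi a' b' -> phi a' b' < i -> False.
  move=> u1 u2 u3 a' b' hu1 hu2 hu3 hd hs hv' hp1 hp2.
  have := pos_mul hg hp1.
  have := pos_mul hg (_ : 0 < i - phi a' b').
  have := dotA u1 u2 u3 a' b'; have := sumA u1 u2 u3 a' b'.
  move: hv' => [v1 [v2 v3]].
  move=> E1 E2 P1 P2.
  apply: (H _ _ _ v1 v2 v3); lia.
have hrange : 1 <= i /\ (i <= p \/ i <= q).
  split; first by lia.
  have [//|hh] : (i <= p \/ i <= q) \/ (p < i /\ q < i) by lia.
  case: hh => hh1 hh2.
  have [a' [b' [hv' [hp1 hp2]]]] := bound _ _ _ _ _ h1 h2 h3 hv hh1 hh2.
  by exfalso; apply: (help y1 y2 y3 a' b').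
split; first by apply/rngE.
have [y1' [y2' [y3' [a' [b' [k1 [k2 [k3 [hv' [hd [hs [hph' [hA1 hA2]]]]]]]]]]]]] :=
  G1 (absz (A2 a b)) y1 y2 y3 a b h1 h2 h3 hv (ltac:(lia)).
have help' : forall a'' b'', valid y1' y2' y3' a'' b'' -> 0 < phi a'' b'' -> phi a'' b'' < i -> False.
  by move=> a'' b'' hv'' hp1 hp2; apply: (help y1' y2' y3' a'' b'').
have [[ha hb]|[ha [ha2 [hb hb2]]]] := classify a' b' (ltac:(lia)) (ltac:(lia)) hA1 hA2.
  left; exists a', (- b'); split.
    by rewrite /lam_couple; move: hph'; rewrite /i /phi; lia.
  move=> [j [k [xj [yj [xk [yk [rj [rk [cj [ck [ex ey]]]]]]]]]]].
  move: rj rk => /rngE rj /rngE rk.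
  move: cj ck; rewrite /lam_couple => cj ck.
  have hxj : xj <= 0.
    rewrite leNgt; apply/negP => hh.
    have := nneg_mul (_ : 0 <= xj - 1) (ltW hp); have := nneg_mul (_ : 0 <= yj - 1) (ltW hq); lia.
  have hxk : xk <= 0.
    rewrite leNgt; apply/negP => hh.
    have := nneg_mul (_ : 0 <= xk - 1) (ltW hp); have := nneg_mul (_ : 0 <= yk - 1) (ltW hq); lia.
  have eb : b' = - yj + - yk by lia.
  rewrite ex eb in hv' hph'.
  have hpj : phi xj (- yj) = j by rewrite /phi; lia.
  have hpk : phi xk (- yk) = k by rewrite /phi; lia.
  have hjk : i = j + k by move: hph'; rewrite /i /phi; lia.
  have [hh|hh] := LBl _ _ _ _ _ _ _ k1 k2 k3 hv' hxj (ltac:(lia)) hxk (ltac:(lia)) (ltac:(lia)) (ltac:(lia)).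
    by apply: (help' _ _ hh); lia.
  by apply: (help' _ _ hh); lia.
right; exists a', (- b'); split.
  by rewrite /mu_couple; move: hph'; rewrite /i /phi; lia.
move=> [j [k [xj [yj [xk [yk [rj [rk [cj [ck [ex ey]]]]]]]]]]].
move: rj rk => /rngE rj /rngE rk.
move: cj ck; rewrite /mu_couple => cj ck.
have hyj : yj <= 0.
  rewrite leNgt; apply/negP => hh.
  have := nneg_mul (_ : 0 <= xj - 1) (ltW hp); have := nneg_mul (_ : 0 <= yj - 1) (ltW hq); lia.
have hyk : yk <= 0.
  rewrite leNgt; apply/negP => hh.
  have := nneg_mul (_ : 0 <= xk - 1) (ltW hp); have := nneg_mul (_ : 0 <= yk - 1) (ltW hq); lia.
have eb : b' = - yj + - yk by lia.
rewrite ex eb in hv' hph'.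
have hpj : phi xj (- yj) = j by rewrite /phi; lia.
have hpk : phi xk (- yk) = k by rewrite /phi; lia.
have hjk : i = j + k by move: hph'; rewrite /i /phi; lia.
have [hh|hh] := LBm _ _ _ _ _ _ _ k1 k2 k3 hv' (ltac:(lia)) (ltac:(lia)) (ltac:(lia)) (ltac:(lia)) (ltac:(lia)) (ltac:(lia)).
  by apply: (help' _ _ hh); lia.
by apply: (help' _ _ hh); lia.
Qed.


Lemma negpart (t : int) : exists y0, 0 <= y0 /\ 0 <= y0 + t /\ (y0 = 0 \/ y0 + t = 0).
Proof.
have [h|h] : t < 0 \/ 0 <= t by lia.
  by exists (- t); lia.
by exists 0; lia.
Qed.

Lemma gpos_iff u v : g * u < g * v -> u < v.
Proof.
move=> h; rewrite ltNge; apply/negP => h'.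
have := nneg_mul (ltW hg) (_ : 0 <= u - v); lia.
Qed.

Lemma SupCore (lam : bool) i x y :
  1 <= i -> (i <= p \/ i <= q) -> x * p + y * q = i ->
  (if lam then 0 < y /\ y <= p else 0 < x /\ x <= q) ->
  ~ (exists j k xj yj xk yk, in_range p q j /\ in_range p q k /\
        (if lam then lam_couple p q j xj yj else mu_couple p q j xj yj) /\
        (if lam then lam_couple p q k xk yk else mu_couple p q k xk yk) /\ x = xj + xk /\ y = yj + yk) ->
  exists y01 y02 y03, 0 <= y01 /\ 0 <= y02 /\ 0 <= y03 /\ valid y01 y02 y03 x (- y) /\
    (forall w1 w2 w3, 0 <= w1 -> 0 <= w2 -> 0 <= w3 ->
      w1 * n1 + w2 * n2 + w3 * n3 = y01 * n1 + y02 * n2 + y03 * n3 ->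
      y01 + y02 + y03 < w1 + w2 + w3 -> w1 + w2 + w3 < y01 + y02 + y03 + g * i -> False).
Proof.
move=> hi1 hi2 Ei hc Irr.
have [y01 [h11 [h12 h13]]] := negpart (A1 x (- y)).
have [y02 [h21 [h22 h23]]] := negpart (A2 x (- y)).
have [y03 [h31 [h32 h33]]] := negpart (A3 x (- y)).
exists y01, y02, y03; do 4 (split; first by rewrite /valid; lia).
move=> w1 w2 w3 hw1 hw2 hw3 hd hs1 hs2.
have [a' [b' [e1' [e2' e3']]]] := LM (w1 - y01) (w2 - y02) (w3 - y03) (ltac:(lia)).
have hv : valid y01 y02 y03 a' b' by rewrite /valid /A1 /A2 /A3; lia.
have S := sumA y01 y02 y03 a' b'.
have hp1 : 0 < phi a' b'.
  apply: gpos_iff; rewrite mulr0; rewrite /A1 /A2 /A3 in S; lia.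
have hp2 : phi a' b' < i.
  apply: gpos_iff; rewrite /A1 /A2 /A3 in S; lia.
case: lam hc Irr => hc Irr.
  by apply: (RealL _ _ _ _ _ _ _ _ hi1 hi2 Ei (proj1 hc) (proj2 hc) Irr h11 h12 h13 h21 h22 h23 h31 h32 h33 hv hp1 hp2).
by apply: (RealM _ _ _ _ _ _ _ _ hi1 hi2 Ei (proj1 hc) (proj2 hc) Irr h11 h12 h13 h21 h22 h23 h31 h32 h33 hv hp1 hp2).
Qed.


Lemma MainInt (N1 N2 N3 : nat) : n1 = N1%:Z -> n2 = N2%:Z -> n3 = N3%:Z -> forall d : nat,
  in_Delta_S N1 N2 N3 d <-> exists i : int, in_range p q i /\
    (irreducible_couple lam_couple p q i \/ irreducible_couple mu_couple p q i) /\ d%:Z = g * i.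
Proof.
move=> E1 E2 E3 d.
have islE : forall s m, is_length N1 N2 N3 s m <-> exists y1 y2 y3 : int,
    0 <= y1 /\ 0 <= y2 /\ 0 <= y3 /\ y1 * n1 + y2 * n2 + y3 * n3 = s%:Z /\ y1 + y2 + y3 = m%:Z.
  move=> s m; rewrite E1 E2 E3; split.
    by move=> [x1 [x2 [x3 [ex sx]]]]; exists x1%:Z, x2%:Z, x3%:Z; lia.
  by move=> [y1 [y2 [y3 [h1 [h2 [h3 [ex sx]]]]]]]; exists (absz y1), (absz y2), (absz y3); lia.
split.
  move=> [s [m [m' [hm [hm' [hlt [hd hbt]]]]]]].
  have [y1 [y2 [y3 [h1 [h2 [h3 [ex sx]]]]]]] := (islE s m).1 hm.
  have [z1 [z2 [z3 [k1 [k2 [k3 [ez sz]]]]]]] := (islE s m').1 hm'.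
  have [a [b [ea [eb ec]]]] := LM (z1 - y1) (z2 - y2) (z3 - y3) (ltac:(lia)).
  have hv : valid y1 y2 y3 a b by rewrite /valid /A1 /A2 /A3; lia.
  have S := sumA y1 y2 y3 a b.
  rewrite /A1 /A2 /A3 in S.
  have hph : 0 < phi a b by apply: gpos_iff; rewrite mulr0; lia.
  have H : forall w1 w2 w3, 0 <= w1 -> 0 <= w2 -> 0 <= w3 ->
     w1 * n1 + w2 * n2 + w3 * n3 = y1 * n1 + y2 * n2 + y3 * n3 ->
     y1 + y2 + y3 < w1 + w2 + w3 -> w1 + w2 + w3 < y1 + y2 + y3 + g * phi a b -> False.
    move=> w1 w2 w3 hw1 hw2 hw3 hd' hs1 hs2.
    have ht1 : (m < absz (w1 + w2 + w3)%R)%N by lia.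
    have ht2 : (absz (w1 + w2 + w3)%R < m')%N by lia.
    apply: (hbt _ ht1 ht2).
    by apply/islE; exists w1, w2, w3; lia.
  have [hr hirr] := SubCore _ _ _ _ _ h1 h2 h3 hv hph H.
  exists (phi a b); split => //; split => //.
  lia.
move=> [i [hr [hirr hd]]].
move: hr => /rngE [hi1 hi2].
have [lam [x [y [hc [Ei hnot]]]]] : exists (lam : bool) (x y : int),
    (if lam then 0 < y /\ y <= p else 0 < x /\ x <= q) /\ x * p + y * q = i /\
    ~ (exists j k xj yj xk yk, in_range p q j /\ in_range p q k /\
        (if lam then lam_couple p q j xj yj else mu_couple p q j xj yj) /\
        (if lam then lam_couple p q k xk yk else mu_couple p q k xk yk) /\ x = xj + xk /\ y = yj + yk).
  case: hirr => [[x [y [[Ei hc] hnot]]]|[x [y [[Ei hc] hnot]]]].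
    by exists true, x, y.
  by exists false, x, y.
have [y01 [y02 [y03 [h1 [h2 [h3 [hv BF]]]]]]] := SupCore lam _ _ _ hi1 hi2 Ei hc hnot.
have P1 := nneg_mul h1 (ltW hn1).
have P2 := nneg_mul h2 (ltW n2p).
have P3 := nneg_mul h3 (ltW n3p).
have gi := pos_mul hg hi1.
have D := dotA y01 y02 y03 x (- y).
have S := sumA y01 y02 y03 x (- y).
have hphz : phi x (- y) = i by rewrite /phi; lia.
rewrite hphz in S.
move: hv; rewrite /valid => -[v1 [v2 v3]].
exists (absz (y01 * n1 + y02 * n2 + y03 * n3)), (absz (y01 + y02 + y03)),
  (absz (y01 + y02 + y03 + g * i)).
split.
  by apply/islE; exists y01, y02, y03; lia.
split.
  by apply/islE; exists (y01 + A1 x (- y)), (y02 + A2 x (- y)), (y03 + A3 x (- y)); lia.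
split; first by lia.
split; first by lia.
move=> t ht1 ht2 /islE [w1 [w2 [w3 [hw1 [hw2 [hw3 [ew sw]]]]]]].
by apply: (BF w1 w2 w3 hw1 hw2 hw3); lia.
Qed.

End Core.

Theorem theorem2p15 (n1 n2 n3 : nat)
  (c1 r12 r13 c3 r31 r32 : nat) :
  (0 < n1)%N -> (n1 < n2)%N -> (n2 < n3)%N ->
  gcdn n1 (gcdn n2 n3) = 1%N ->
  min_gen n1 n2 n3 ->
  ~ symmetric3 n1 n2 n3 ->
  is_c n1 n2 n3 c1 -> (0 < r12)%N -> (0 < r13)%N ->
  (c1 * n1 = r12 * n2 + r13 * n3)%N ->
  is_c n3 n1 n2 c3 -> (0 < r31)%N -> (0 < r32)%N ->
  (c3 * n3 = r31 * n1 + r32 * n2)%N ->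
  let delta1 : int := c1%:Z - r12%:Z - r13%:Z in
  let delta3 : int := r31%:Z + r32%:Z - c3%:Z in
  let g : int := gcdz delta1 delta3 in
  let p : int := (delta1 %/ g)%Z in
  let q : int := (delta3 %/ g)%Z in
  forall d : nat,
    in_Delta_S n1 n2 n3 d <->
    exists i : int, in_range p q i /\
      (irreducible_couple lam_couple p q i \/ irreducible_couple mu_couple p q i) /\
      d%:Z = g * i.
Proof.
move=> hn1 hn12 hn23 _ _ _ [hc1 [_ hm1]] hr12 hr13 e1 [hc3 [_ hm3]] hr31 hr32 e3
  delta1 delta3 g p q d.
have hd1 : (r12 + r13 < c1)%N by nia.
have hd3 : (c3 < r31 + r32)%N by nia.
have Hd1 : 0 < delta1 by rewrite /delta1; lia.
have Hd3 : 0 < delta3 by rewrite /delta3; lia.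
have hg0 : 0 <= g by rewrite /g /gcdz.
have hgn : g != 0.
  apply/negP; rewrite /g gcdz_eq0 => /andP [/eqP h _]; lia.
have hgp : 0 < g by lia.
have Ep : p * g = delta1 := divzK (dvdz_gcdl delta1 delta3).
have Eq : q * g = delta3 := divzK (dvdz_gcdr delta1 delta3).
have hp : 0 < p.
  rewrite ltNge; apply/negP => h.
  have : p * g <= 0 by nia.
  lia.
have hq : 0 < q.
  rewrite ltNge; apply/negP => h.
  have : q * g <= 0 by nia.
  lia.
have m1' : forall k u v : int, 0 < k -> k < c1%:Z -> 0 <= u -> 0 <= v ->
    k * n1%:Z <> u * n2%:Z + v * n3%:Z.
  move=> k u v hk hk' hu hv E.
  apply: (hm1 (absz k)); [lia | lia | ].
  exists (absz u), (absz v); lia.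
have m3' : forall k u v : int, 0 < k -> k < c3%:Z -> 0 <= u -> 0 <= v ->
    k * n3%:Z <> u * n1%:Z + v * n2%:Z.
  move=> k u v hk hk' hu hv E.
  apply: (hm3 (absz k)); [lia | lia | ].
  exists (absz u), (absz v); lia.
apply: (@MainInt n1%:Z n2%:Z n3%:Z c1%:Z r12%:Z r13%:Z c3%:Z r31%:Z r32%:Z g p q); first [exact: m1' | exact: m3' | lia].
Qed.
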